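(* Assume $\mathrm{NF}_f(G_0,G_1,G_2,G_3)$, and let $a \in G_1 \setminus G_0$ and $b \in G_2 \setminus G_0$. Then $a$ and $b$ commute in $G_3$ if and only if $a$ commutes with every element of $G_0$, $b$ commutes with every element of $G_0$, and $G_0$ is commutative.
   Context: A group is locally finite if every finitely generated subgroup is finite. An amalgamation try is $\mathbf{x} = (G_{\mathbf{x},0},G_{\mathbf{x},1},G_{\mathbf{x},2},\mathbf{I}_{\mathbf{x},1},\mathbf{I}_{\mathbf{x},2})$ where $G_{\mathbf{x},1},G_{\mathbf{x},2}$ are locally finite groups with common subgroup $G_{\mathbf{x},0}$, $\mathbf{I}_{\mathbf{x},\ell}$ is a set of representatives (without repetition) of the left cosets of $G_{\mathbf{x},0}$ in $G_{\mathbf{x},\ell}$, and $e \in \mathbf{I}_{\mathbf{x},1}\cap\mathbf{I}_{\mathbf{x},2}$. With $\mathcal{U}_{\mathbf{x}} = \{(g_0,g_1,g_2): g_0 \in G_{\mathbf{x},0}, g_\ell \in \mathbf{I}_{\mathbf{x},\ell}\}$, for $g \in G_{\mathbf{x},1}$ the permutation $\mathbf{j}_{\mathbf{x},1}(g)$ maps $(g_0,g_1,g_2)$ to $(g_0',g_1',g_2)$ where $(g_1',g_0') \in \mathbf{I}_{\mathbf{x},1}\times G_{\mathbf{x},0}$ is unique with $g_1'g_0' = g_1g_0g$; symmetrically $\mathbf{j}_{\mathbf{x},2}(g)$ for $g \in G_{\mathbf{x},2}$ maps $(g_0,g_1,g_2)$ to $(g_0',g_1,g_2')$ with $g_2'g_0'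 = g_2g_0g$. Permutations act on the right and $G_{\mathbf{x}}$ is the permutation group generated by $\mathbf{j}_{\mathbf{x},1}(G_{\mathbf{x},1}) \cup \mathbf{j}_{\mathbf{x},2}(G_{\mathbf{x},2})$. $\mathrm{NF}_{\mathrm{fin}}(G_0,G_1,G_2,G_3)$ means: $G_0,G_1,G_2$ finite, $G_3$ locally finite, $G_0 \subseteq G_\ell \subseteq G_3$, $G_3 = \langle G_1\cup G_2\rangle$; for every amalgamation try $\mathbf{x}$ with $G_{\mathbf{x},0} = G_0$, $G_\ell \subseteq G_{\mathbf{x},\ell}$ ($\ell=1,2$) there is a homomorphism $\mathbf{f}:G_3 \to G_{\mathbf{x}}$ with $\mathbf{f}\restriction G_\ell = \mathbf{j}_{\mathbf{x},\ell}\restriction G_\ell$; and for every $a \in G_3\setminus\{e\}$ some such $\mathbf{x},\mathbf{f}$ has $\mathbf{f}(a)\ne e$. $\mathrm{NF}_f(G_0,G_1,G_2,G_3)$ means: $G_0,\dots,G_3$ are locally finite groups, $G_0$ is finite, $G_0 \subseteq G_\ell \subseteq G_3$ for $\ell = 1,2$, and whenever $G_1',G_2'$ are finite groups with $G_0 \subseteq G_\ell' \subseteq G_\ell$ and $G_3' = \langle G_1' \cup G_2'\rangle_{G_3}$, we have $\mathrm{NF}_{\mathrm{fin}}(G_0,G_1',G_2',G_3')$. *)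

(* Defs.v *)
From mathcomp Require Import all_boot.

Set Implicit Arguments.
Unset Strict Implicit.
Unset Printing Implicit Defensive.

Local Open Scope group_scope.

Section Basics.
Variable H : groupType.

Definition subgroup (S : H -> Prop) : Prop :=
  S 1 /\ (forall x y, S x -> S y -> S (x * y)) /\ (forall x, S x -> S (x^-1)).

Definition gen (A : H -> Prop) : H -> Prop :=
  fun x => forall S, subgroup S -> (forall y, A y -> S y) -> S x.

Definition finite_set (A : H -> Prop) : Prop :=
  exists s : seq H, forall x, A x -> x \in s.

Definition locally_finite_sub (S : H -> Prop) : Prop :=
  forall s : seq H, (forall x, x \in s -> S x) ->
    finite_set (gen (fun x => x \in s)).

Definition locally_finite : Prop := locally_finite_sub (fun _ => True).

End Basics.

(* An amalgamation try x with G_{x,0} = G0 and G1 <= G_{x,1}, G2 <= G_{x,2}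
   (all of G0, G1, G2 being subgroups of the ambient group T).
   The inclusions G_l <= G_{x,l} are given by embeddings e_l (injective
   homomorphisms on G_l); G0 is the common subgroup, embedded via e_l on G0. *)
Record amalg_try (T : groupType) (G0 G1 G2 : T -> Prop) := AmalgTry {
  at_H1 : groupType;
  at_H2 : groupType;
  at_H1_lf : locally_finite at_H1;
  at_H2_lf : locally_finite at_H2;
  at_e1 : T -> at_H1;
  at_e2 : T -> at_H2;
  at_e1_hom : forall g h, G1 g -> G1 h -> at_e1 (g * h) = at_e1 g * at_e1 h;
  at_e2_hom : forall g h, G2 g -> G2 h -> at_e2 (g * h) = at_e2 g * at_e2 h;
  at_e1_inj : forall g h, G1 g -> G1 h -> at_e1 g = at_e1 h -> g = h;
  at_e2_inj : forall g h, G2 g -> G2 h -> at_e2 g = at_e2 h -> g = h;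
  at_I1 : at_H1 -> Prop;
  at_I2 : at_H2 -> Prop;
  at_I1_e : at_I1 1;
  at_I2_e : at_I2 1;
  at_I1_cover : forall h, exists i, at_I1 i /\ exists g0, G0 g0 /\ h = i * at_e1 g0;
  at_I2_cover : forall h, exists i, at_I2 i /\ exists g0, G0 g0 /\ h = i * at_e2 g0;
  at_I1_norep : forall i i', at_I1 i -> at_I1 i' ->
     (exists g0, G0 g0 /\ i' = i * at_e1 g0) -> i = i';
  at_I2_norep : forall i i', at_I2 i -> at_I2 i' ->
     (exists g0, G0 g0 /\ i' = i * at_e2 g0) -> i = i'
}.

Arguments at_I1 [T G0 G1 G2] a _.
Arguments at_I2 [T G0 G1 G2] a _.

Section Try.
Variables (T : groupType) (G0 G1 G2 : T -> Prop) (x : amalg_try G0 G1 G2).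

Definition pt := (T * at_H1 x * at_H2 x)%type.

Definition inU (u : pt) : Prop :=
  G0 u.1.1 /\ at_I1 x u.1.2 /\ at_I2 x u.2.

Definition j1 (h : at_H1 x) (u v : pt) : Prop :=
  v.2 = u.2 /\ G0 v.1.1 /\ at_I1 x v.1.2 /\
  v.1.2 * at_e1 x v.1.1 = u.1.2 * at_e1 x u.1.1 * h.

Definition j2 (h : at_H2 x) (u v : pt) : Prop :=
  v.1.2 = u.1.2 /\ G0 v.1.1 /\ at_I2 x v.2 /\
  v.2 * at_e2 x v.1.1 = u.2 * at_e2 x u.1.1 * h.

(* successive application (permutations act on the right) of a word of
   generators j_{x,1}(h) / j_{x,2}(h) *)
Fixpoint word_rel (w : seq (at_H1 x + at_H2 x)) (u v : pt) : Prop :=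
  match w with
  | [::] => v = u
  | inl h :: w' => exists m, j1 h u m /\ word_rel w' m v
  | inr h :: w' => exists m, j2 h u m /\ word_rel w' m v
  end.

(* p : U_x -> U_x (represented on pt, only its values on U_x matter) belongs
   to the permutation group G_x generated by j1(G_{x,1}) and j2(G_{x,2})
   (these generating sets are closed under inverses, so G_x consists of
   the finite products of generators) *)
Definition in_Gx (p : pt -> pt) : Prop :=
  exists w, forall u, inU u -> word_rel w u (p u).

Definition hom_to_Gx (S : T -> Prop) (f : T -> pt -> pt) : Prop :=
  (forall g, S g -> in_Gx (f g)) /\
  (forall u, inU u -> f 1 u = u) /\
  (forall g h, S g -> S h -> forall u, inU u -> f (g * h) u = f h (f g u)).

Definition extends_j (f : T -> pt -> pt) : Prop :=
  (forall g, G1 g -> forall u, inU u -> j1 (at_e1 x g) u (f g u)) /\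
  (forall g, G2 g -> forall u, inU u -> j2 (at_e2 x g) u (f g u)).

End Try.

Arguments pt [T G0 G1 G2] x.
Arguments inU [T G0 G1 G2] x u.
Arguments in_Gx [T G0 G1 G2] x p.
Arguments hom_to_Gx [T G0 G1 G2] x S f.
Arguments extends_j [T G0 G1 G2] x f.

Definition NF_fin (T : groupType) (G0 G1 G2 G3 : T -> Prop) : Prop :=
  [/\ subgroup G0, subgroup G1, subgroup G2, subgroup G3 &
  [/\ finite_set G0, finite_set G1, finite_set G2, locally_finite_sub G3 &
  [/\ (forall g, G0 g -> G1 g), (forall g, G0 g -> G2 g),
      (forall g, G1 g -> G3 g), (forall g, G2 g -> G3 g) &
  [/\ (forall g, G3 g <-> gen (fun y => G1 y \/ G2 y) g),
      (forall x : amalg_try G0 G1 G2,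
         exists f, hom_to_Gx x G3 f /\ extends_j x f) &
      (forall a, G3 a -> a <> 1 ->
         exists (x : amalg_try G0 G1 G2) (f : T -> pt x -> pt x),
           [/\ hom_to_Gx x G3 f, extends_j x f &
               exists u, inU x u /\ f a u <> u])]]]].

(* NF_f(G0,G1,G2,G3) with G3 the whole (locally finite) group T *)
Definition NF_f (T : groupType) (G0 G1 G2 : T -> Prop) : Prop :=
  [/\ locally_finite T, subgroup G0, subgroup G1, subgroup G2 &
  [/\ finite_set G0, (forall g, G0 g -> G1 g), (forall g, G0 g -> G2 g) &
  forall G1' G2' : T -> Prop,
    subgroup G1' -> subgroup G2' -> finite_set G1' -> finite_set G2' ->
    (forall g, G0 g -> G1' g) -> (forall g, G1' g -> G1 g) ->
    (forall g, G0 g -> G2' g) -> (forall g, G2' g -> G2 g) ->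
    NF_fin G0 G1' G2' (gen (fun y => G1' y \/ G2' y))]].

(* Main.v *)
From Stdlib Require Import ClassicalEpsilon FunctionalExtensionality PropExtensionality Classical.
Require Import Defs.
From mathcomp Require Import all_boot.
Set Implicit Arguments.
Unset Strict Implicit.
Local Open Scope group_scope.

Section SG.
Variable T : groupType.
Implicit Types S : T -> Prop.
Lemma sg1 S : subgroup S -> S 1. Proof. by case. Qed.
Lemma sgM S x y : subgroup S -> S x -> S y -> S (x*y).
Proof. by case=> _ [H _]; apply: H. Qed.
Lemma sgV S x : subgroup S -> S x -> S x^-1.
Proof. by case=> _ [_ H]; apply: H. Qed.
Lemma sg_right S (g u : T) : subgroup S -> S g -> (S (u * g) <-> S u).
Proof.
move=> sS Sg; split=> H; last exact: sgM.
by have := sgM sS H (sgV sS Sg); rewrite mulgK.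
Qed.
Lemma sg_shift S (u v w : T) : subgroup S -> S (u^-1 * v) -> (S (w*u) <-> S (w*v)).
Proof.
move=> sS H; rewrite (_ : w*v = (w*u)*(u^-1*v)); last by rewrite -mulgA mulVKg.
by split=> [H1|]; [apply: sgM | move/(sg_right _ sS H)].
Qed.
Lemma gen_sub (A : T -> Prop) : subgroup (gen A).
Proof. split; [|split].
- by move=> S sS _; apply: sg1.
- by move=> x y gx gy S sS AS; apply: sgM => //; [apply: gx | apply: gy].
- by move=> x gx S sS AS; apply: sgV => //; apply: gx.
Qed.
Lemma gen_incl (A : T -> Prop) y : A y -> gen A y. Proof. by move=> Ay S _ AS; apply: AS. Qed.
Lemma gen_min (A : T -> Prop) S : subgroup S -> (forall y, A y -> S y) -> forall y, gen A y -> S y.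
Proof. by move=> sS AS y gy; apply: gy. Qed.
End SG.

Section Rep.
Variables (T : groupType) (G0 : T -> Prop).
Hypothesis sG0 : subgroup G0.

Definition Rc (c x : T) : T :=
  if excluded_middle_informative (G0 x) then 1 else
  if excluded_middle_informative (G0 (c^-1 * x)) then c else
  epsilon (inhabits (1:T)) (fun y => G0 (x^-1 * y)).

Lemma Rc_coset c x : G0 (x^-1 * Rc c x).
Proof.
rewrite /Rc; case: excluded_middle_informative => H.
  by rewrite mulg1; apply: sgV.
case: excluded_middle_informative => H2.
  by have := sgV sG0 H2; rewrite invgM invgK.
apply: (epsilon_spec (inhabits (1:T)) (fun y => G0 (x^-1*y))).
by exists x; rewrite mulVg; apply: sg1.
Qed.

Lemma Rc_inv c x y : G0 (x^-1 * y) -> Rc c x = Rc c y.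
Proof.
move=> Hxy.
have E1 : G0 x <-> G0 y.
  by rewrite -(mul1g x) -(mul1g y) (sg_shift 1 sG0 Hxy).
have E2 : G0 (c^-1 * x) <-> G0 (c^-1 * y) by apply: sg_shift.
have E3 : (fun z => G0 (x^-1*z)) = (fun z => G0 (y^-1*z)).
  apply: functional_extensionality => z; apply: propositional_extensionality.
  split=> H.
    have := sgM sG0 (sgV sG0 Hxy) H; by rewrite invgM invgK mulgA mulgK.
  have := sgM sG0 Hxy H; by rewrite mulgA mulgK.
rewrite /Rc E3.
case: (excluded_middle_informative (G0 x)) => h1; case: (excluded_middle_informative (G0 y)) => h2 /=; try (exfalso; tauto); first done.
case: (excluded_middle_informative (G0 (c^-1*x))) => h3; case: (excluded_middle_informative (G0 (c^-1*y))) => h4 /=; try (exfalso; tauto); done.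
Qed.

Lemma Rc1 c : Rc c 1 = 1.
Proof. rewrite /Rc; case: excluded_middle_informative => // H; exfalso; apply: H; exact: sg1. Qed.

Lemma Rc_c c x : ~ G0 x -> G0 (c^-1 * x) -> Rc c x = c.
Proof. rewrite /Rc => H1 H2; case: excluded_middle_informative => //; case: excluded_middle_informative => //. Qed.

Lemma decomp c v1 v0 X : Rc c v1 = v1 -> G0 v0 -> v1 * v0 = X ->
  v1 = Rc c X /\ v0 = (Rc c X)^-1 * X.
Proof.
move=> Hv1 Hv0 E.
have : Rc c v1 = Rc c X by apply: Rc_inv; rewrite -E mulKg.
rewrite Hv1 => <-; split=> //; by rewrite -E mulKg.
Qed.

Lemma I_cover c : forall h : T, exists i, Rc c i = i /\ exists g0, G0 g0 /\ h = i * g0.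
Proof.
move=> h; exists (Rc c h); split.
  apply: esym; apply: Rc_inv.
  exact: Rc_coset.
exists ((Rc c h)^-1 * h); split; last by rewrite mulVKg.
by have := sgV sG0 (Rc_coset c h); rewrite invgM invgK.
Qed.

Lemma I_norep c : forall i i' : T, Rc c i = i -> Rc c i' = i' ->
  (exists g0, G0 g0 /\ i' = i * g0) -> i = i'.
Proof.
move=> i i' Hi Hi' [g0 [Hg E]].
by rewrite -Hi -Hi'; apply: Rc_inv; rewrite E mulKg.
Qed.

Variables (G1 G2 : T -> Prop) (lfT : locally_finite T).

Definition mk_try (c1 c2 : T) : amalg_try G0 G1 G2 :=
  @AmalgTry T G0 G1 G2 T T lfT lfT id id
    (fun g h _ _ => erefl) (fun g h _ _ => erefl)
    (fun g h _ _ E => E) (fun g h _ _ E => E)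
    (fun x => Rc c1 x = x) (fun x => Rc c2 x = x) (@Rc1 c1) (@Rc1 c2)
    (@I_cover c1) (@I_cover c2) (@I_norep c1) (@I_norep c2).

Lemma j1_eval c1 c2 h (u v : pt (mk_try c1 c2)) :
  j1 (at_e1 (mk_try c1 c2) h) u v ->
  v = (((Rc c1 (u.1.2 * u.1.1 * h))^-1 * (u.1.2 * u.1.1 * h), Rc c1 (u.1.2 * u.1.1 * h)), u.2).
Proof.
case: v => [[v0 v1] v2]; rewrite /j1 /= => [[-> [Hv0 [Hv1 E]]]].
by have [-> ->] := decomp Hv1 Hv0 E.
Qed.

Lemma j2_eval c1 c2 h (u v : pt (mk_try c1 c2)) :
  j2 (at_e2 (mk_try c1 c2) h) u v ->
  v = (((Rc c2 (u.2 * u.1.1 * h))^-1 * (u.2 * u.1.1 * h), u.1.2), Rc c2 (u.2 * u.1.1 * h)).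
Proof.
case: v => [[v0 v1] v2]; rewrite /j2 /= => [[-> [Hv0 [Hv1 E]]]].
by have [-> ->] := decomp Hv1 Hv0 E.
Qed.
End Rep.

Section GT.
Variables (T : groupType) (G0 G1 G2 : T -> Prop) (x : amalg_try G0 G1 G2).
Hypotheses (sG0 : subgroup G0) (sG1 : subgroup G1) (sG2 : subgroup G2).
Hypotheses (G01 : forall g, G0 g -> G1 g) (G02 : forall g, G0 g -> G2 g).

Lemma fU S f g u : hom_to_Gx x S f -> S g -> inU x u -> inU x (f g u).
Proof.
case=> Hin _ Sg Hu; case: (Hin g Sg) => w Hw.
move: (Hw u Hu); move: (f g u); clear Hw.
elim: w u Hu => [|[h|h] w IH] u Hu v /=; first by move->.
  case=> m [[e [Gm [Im _]]] Hm]; apply: IH Hm.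
  by rewrite /inU e; case: Hu => _ [_ ?].
case=> m [[e [Gm [Im _]]] Hm]; apply: IH Hm.
by rewrite /inU e; case: Hu => _ [? _].
Qed.

Lemma e1_1 : at_e1 x 1 = 1.
Proof.
have := at_e1_hom x (sg1 sG1) (sg1 sG1); rewrite mulg1 => E.
by apply: (mulgI (at_e1 x 1)); rewrite -E mulg1.
Qed.
Lemma e2_1 : at_e2 x 1 = 1.
Proof.
have := at_e2_hom x (sg1 sG2) (sg1 sG2); rewrite mulg1 => E.
by apply: (mulgI (at_e2 x 1)); rewrite -E mulg1.
Qed.
Lemma e1_V g : G1 g -> at_e1 x g^-1 = (at_e1 x g)^-1.
Proof.
move=> Hg; have := at_e1_hom x Hg (sgV sG1 Hg); rewrite mulgV e1_1 => E.
by apply: (mulgI (at_e1 x g)); rewrite -E mulgV.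
Qed.
Lemma e2_V g : G2 g -> at_e2 x g^-1 = (at_e2 x g)^-1.
Proof.
move=> Hg; have := at_e2_hom x Hg (sgV sG2 Hg); rewrite mulgV e2_1 => E.
by apply: (mulgI (at_e2 x g)); rewrite -E mulgV.
Qed.

Lemma uniq1 i i' g g' : at_I1 x i -> at_I1 x i' -> G0 g -> G0 g' ->
  i * at_e1 x g = i' * at_e1 x g' -> i = i' /\ g = g'.
Proof.
move=> Hi Hi' Hg Hg' E.
have ii' : i = i'.
  apply: (at_I1_norep Hi Hi'); exists (g * g'^-1); split.
    by apply: sgM => //; apply: sgV.
  by rewrite (at_e1_hom x (G01 Hg) (sgV sG1 (G01 Hg'))) (e1_V (G01 Hg')) mulgA E mulgK.
subst i'; split=> //.
have E' := congr1 (fun z => i^-1 * z) E; rewrite /= !mulKg in E'.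
exact: (@at_e1_inj _ _ _ _ x g g' (G01 Hg) (G01 Hg') E').
Qed.

Lemma uniq2 i i' g g' : at_I2 x i -> at_I2 x i' -> G0 g -> G0 g' ->
  i * at_e2 x g = i' * at_e2 x g' -> i = i' /\ g = g'.
Proof.
move=> Hi Hi' Hg Hg' E.
have ii' : i = i'.
  apply: (at_I2_norep Hi Hi'); exists (g * g'^-1); split.
    by apply: sgM => //; apply: sgV.
  by rewrite (at_e2_hom x (G02 Hg) (sgV sG2 (G02 Hg'))) (e2_V (G02 Hg')) mulgA E mulgK.
subst i'; split=> //.
have E' := congr1 (fun z => i^-1 * z) E; rewrite /= !mulKg in E'.
exact: (@at_e2_inj _ _ _ _ x g g' (G02 Hg) (G02 Hg') E').
Qed.

Lemma j1_step (w v : pt x) a p1 q : G1 a -> G0 w.1.1 -> a * w.1.1 = w.1.1 * a ->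
  at_I1 x p1 -> G0 q -> w.1.2 * at_e1 x a = p1 * at_e1 x q ->
  j1 (at_e1 x a) w v -> v = ((q * w.1.1, p1), w.2).
Proof.
move=> Ha Hw0 C Hp1 Hq E.
case: v => [[v0 v1] v2]; rewrite /j1 /= => [[-> [Hv0 [Hv1 E2]]]].
have : v1 * at_e1 x v0 = p1 * at_e1 x (q * w.1.1).
  have Hw0' := G01 Hw0; have Hq' := G01 Hq.
  by rewrite E2 -mulgA -(at_e1_hom x Hw0' Ha) -C (at_e1_hom x Ha Hw0') mulgA E -mulgA -(at_e1_hom x Hq' Hw0').
move/(uniq1 Hv1 Hp1 Hv0 (sgM sG0 Hq Hw0)) => [-> ->] //.
Qed.

Lemma j2_step (w v : pt x) b p2 r : G2 b -> G0 w.1.1 -> b * w.1.1 = w.1.1 * b ->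
  at_I2 x p2 -> G0 r -> w.2 * at_e2 x b = p2 * at_e2 x r ->
  j2 (at_e2 x b) w v -> v = ((r * w.1.1, w.1.2), p2).
Proof.
move=> Hb Hw0 C Hp2 Hr E.
case: v => [[v0 v1] v2]; rewrite /j2 /= => [[-> [Hv0 [Hv2 E2]]]].
have : v2 * at_e2 x v0 = p2 * at_e2 x (r * w.1.1).
  have Hw0' := G02 Hw0; have Hq' := G02 Hr.
  by rewrite E2 -mulgA -(at_e2_hom x Hw0' Hb) -C (at_e2_hom x Hb Hw0') mulgA E -mulgA -(at_e2_hom x Hq' Hw0').
move/(uniq2 Hv2 Hp2 Hv0 (sgM sG0 Hr Hw0)) => [-> ->] //.
Qed.
End GT.


Theorem claim2p22 (T : groupType) (G0 G1 G2 : T -> Prop) (a b : T) :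
  NF_f G0 G1 G2 ->
  G1 a -> ~ G0 a -> G2 b -> ~ G0 b ->
  (a * b = b * a <->
   [/\ (forall g, G0 g -> a * g = g * a),
       (forall g, G0 g -> b * g = g * b) &
       (forall g h, G0 g -> G0 h -> g * h = h * g)]).
Proof.
move=> [lfT sG0 sG1 sG2 [fG0 G01 G02 HNF]] G1a nG0a G2b nG0b.
pose G1' := gen (fun y => G0 y \/ y = a).
pose G2' := gen (fun y => G0 y \/ y = b).
have sG1' : subgroup G1' := gen_sub _.
have sG2' : subgroup G2' := gen_sub _.
have G01' : forall g, G0 g -> G1' g by move=> g Hg; apply: gen_incl; left.
have G02' : forall g, G0 g -> G2' g by move=> g Hg; apply: gen_incl; left.
have G1'a : G1' a by apply: gen_incl; right.
have G2'b : G2' b by apply: gen_incl; right.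
have G1'1 : forall g, G1' g -> G1 g.
  by apply: gen_min => // y [/G01|->].
have G2'2 : forall g, G2' g -> G2 g.
  by apply: gen_min => // y [/G02|->].
have [s0 Hs0] := fG0.
have fin1 : finite_set G1'.
  have [s Hs] := lfT (a :: s0) (fun _ _ => I).
  exists s => y Hy; apply: Hs; apply: (gen_min (gen_sub _) _ Hy).
  move=> z [Hz|->]; apply: gen_incl; rewrite inE ?eqxx //; apply/orP; right; exact: Hs0.
have fin2 : finite_set G2'.
  have [s Hs] := lfT (b :: s0) (fun _ _ => I).
  exists s => y Hy; apply: Hs; apply: (gen_min (gen_sub _) _ Hy).
  move=> z [Hz|->]; apply: gen_incl; rewrite inE ?eqxx //; apply/orP; right; exact: Hs0.
have := HNF G1' G2' sG1' sG2' fin1 fin2 G01' G1'1 G02' G2'2.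
case=> _ _ _ sG3 [_ _ _ _ [_ _ G13 G23 [_ Htry Hsep]]].
pose G3 := gen (fun y => G1' y \/ G2' y).
have G3a : G3 a by apply: G13.
have G3b : G3 b by apply: G23.
split.
- move=> Hab.
  have key : forall h k, G0 h -> G0 k ->
      (b*k)^-1 * (1 * ((a*h)^-1 * (1*1*a)) * b) = (a*h)^-1 * (1*((b*k)^-1*(1*1*b))*a).
    move=> h k Hh Hk.
    pose x := mk_try sG0 G1' G2' lfT (a*h) (b*k).
    have [f [hf hext]] := Htry x.
    pose u : pt x := ((1,1),1).
    have Hu : inU x u.
      by split; [apply: sg1 | split; apply: Rc1].
    have E := hf.2.2 a b G3a G3b u Hu.
    have E' := hf.2.2 b a G3b G3a u Hu.
    rewrite Hab E' in E.
    have Ua := fU hf G3a Hu.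
    have Ub := fU hf G3b Hu.
    have Ja := j1_eval (hext.1 a G1'a u Hu).
    have Jb := j2_eval (hext.2 b G2'b u Hu).
    have Jab := j2_eval (hext.2 b G2'b _ Ua).
    have Jba := j1_eval (hext.1 a G1'a _ Ub).
    rewrite Jab Jba Ja Jb /= in E.
    have R1a : Rc G0 (a*h) (1*1*a) = a*h.
      by rewrite !mul1g; apply: Rc_c => //; rewrite invgM -mulgA mulVg mulg1; apply: sgV.
    have R2b : Rc G0 (b*k) (1*1*b) = b*k.
      by rewrite !mul1g; apply: Rc_c => //; rewrite invgM -mulgA mulVg mulg1; apply: sgV.
    rewrite R1a R2b in E.
    case: E => e0 e1 e2.
    by rewrite e1 -e2 in e0.
  have key' : forall h k, G0 h -> G0 k -> k^-1 * b^-1 * (h^-1 * b) = h^-1 * a^-1 * (k^-1 * a).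
    by move=> h k Hh Hk; have := key h k Hh Hk; rewrite !mul1g !invgM !mulgVK.
  have ca : forall g, G0 g -> a*g = g*a.
    move=> g Hg; have := key' 1 g^-1 (sg1 sG0) (sgV sG0 Hg).
    rewrite invg1 invgK !mul1g mulgVK => E.
    by rewrite {1}E mulVKg.
  have cb : forall g, G0 g -> b*g = g*b.
    move=> g Hg; have := key' g^-1 1 (sgV sG0 Hg) (sg1 sG0).
    rewrite invg1 invgK !mul1g mulgVK => E.
    by rewrite -{1}E mulVKg.
  split=> // g h Hg Hh.
  have := key' h^-1 g^-1 (sgV sG0 Hh) (sgV sG0 Hg).
  rewrite !invgK -(cb _ Hh) mulgA mulgVK -(ca _ Hg) mulgA mulgVK.
  by [].
- move=> [ca cb cab].
  case: (classic (a*b = b*a)) => // Hne; exfalso.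
  pose c := (b*a)^-1 * (a*b).
  have G3ab : G3 (a*b) := sgM sG3 G3a G3b.
  have G3ba : G3 (b*a) := sgM sG3 G3b G3a.
  have G3ba' : G3 (b*a)^-1 := sgV sG3 G3ba.
  have Gc : G3 c := sgM sG3 G3ba' G3ab.
  have c1 : c <> 1.
    move=> Ec; apply: Hne.
    by rewrite -[a*b](mulVKg (b*a)) -/c Ec mulg1.
  have [x [f [hf hext [u [Hu Hfu]]]]] := Hsep c Gc c1.
  apply: Hfu.
  have fab : forall w, inU x w -> f (a*b) w = f (b*a) w.
    move=> w Hw.
    rewrite (hf.2.2 a b G3a G3b w Hw) (hf.2.2 b a G3b G3a w Hw).
    have Ua := fU hf G3a Hw.
    have Ub := fU hf G3b Hw.
    have [Hw0 [Hw1 Hw2]] := Hw.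
    have [p1 [Ip1 [q [Gq Eq]]]] := @at_I1_cover _ _ _ _ x (w.1.2 * at_e1 x a).
    have [p2 [Ip2 [r [Gr Er]]]] := @at_I2_cover _ _ _ _ x (w.2 * at_e2 x b).
    have Ja := j1_step sG0 sG1' G01' G1'a Hw0 (ca _ Hw0) Ip1 Gq Eq (hext.1 a G1'a w Hw).
    have Jb := j2_step sG0 sG2' G02' G2'b Hw0 (cb _ Hw0) Ip2 Gr Er (hext.2 b G2'b w Hw).
    have Gqw : G0 (q * w.1.1) := sgM sG0 Gq Hw0.
    have Grw : G0 (r * w.1.1) := sgM sG0 Gr Hw0.
    have Er' : (f a w).2 * at_e2 x b = p2 * at_e2 x r by rewrite Ja.
    have Eq' : (f b w).1.2 * at_e1 x a = p1 * at_e1 x q by rewrite Jb.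
    have Ha0 : G0 (f a w).1.1 by rewrite Ja.
    have Hb0 : G0 (f b w).1.1 by rewrite Jb.
    have Ca : b * (f a w).1.1 = (f a w).1.1 * b by rewrite Ja; apply: cb.
    have Cb : a * (f b w).1.1 = (f b w).1.1 * a by rewrite Jb; apply: ca.
    have Jab := j2_step sG0 sG2' G02' G2'b Ha0 Ca Ip2 Gr Er' (hext.2 b G2'b _ Ua).
    have Jba := j1_step sG0 sG1' G01' G1'a Hb0 Cb Ip1 Gq Eq' (hext.1 a G1'a _ Ub).
    rewrite Jab Jba Ja Jb /=.
    by rewrite !mulgA (cab _ _ Gq Gr).
  pose w := f (b*a)^-1 u.
  have Hw : inU x w := fU hf G3ba' Hu.
  have E1 : f (b*a) w = u.
    by rewrite /w -(hf.2.2 _ _ G3ba' G3ba u Hu) mulVg hf.2.1.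
  by rewrite /c (hf.2.2 _ _ G3ba' G3ab u Hu) -/w fab.
Qed.
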